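(* Let $G\subset\mathrm{SL}(2,\mathbb{C})$ be a finite subgroup and let $P\in\mathbb{C}[x,y]$. The following are equivalent: (1) $P(0,0)=0$ and $g\cdot P=P$ for all $g\in G$; (2) there exists an endomorphism $F=(f_1,f_2)$ of $\mathbb{A}^2$ with $g\cdot F=F$ for all $g\in G$ and $f_1y-f_2x=P$.
   Context: $\mathrm{SL}(2,\mathbb{C})$ acts on $\mathbb{C}[x,y]$ by $g\cdot P=P\circ g^{-1}$ and on $\mathrm{End}(\mathbb{A}^2)=\mathbb{C}[x,y]\times\mathbb{C}[x,y]$ by $g\cdot F=g\circ F\circ g^{-1}$, where $g$ is viewed as a linear automorphism of $\mathbb{A}^2$ and $F=(f_1,f_2)$ means $F(x,y)=(f_1(x,y),f_2(x,y))$. *)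

(* Defs.v *)
From HB Require Import structures.
From mathcomp Require Import all_boot all_order all_algebra all_field.
Set Implicit Arguments. Unset Strict Implicit. Unset Printing Implicit Defensive.
Import GRing.Theory Num.Theory.
Local Open Scope ring_scope.

(* Bivariate polynomials C[x,y] are represented as {poly {poly R}}:
   the outer variable is y, the inner variable is x, i.e.
   P = \sum_j P`_j(x) y^j. *)
Notation bipoly R := {poly {poly R}}.

Section BiPoly.
Variable R : comNzRingType.

Definition bcst (c : R) : bipoly R := c%:P%:P.
Definition bX : bipoly R := ('X)%:P.
Definition bY : bipoly R := 'X.

Definition eval2 (p u v : bipoly R) : bipoly R :=
  \sum_(j < size p) (map_poly (fun c => bcst c) p`_j).[u] * v ^+ j.

Definition at00 (p : bipoly R) : R := (p.[0]).[0].

Definition i0 : 'I_2 := ord0.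
Definition i1 : 'I_2 := ord_max.

Definition lin_app (g : 'M[R]_2) (ab : bipoly R * bipoly R) :=
  (bcst (g i0 i0) * ab.1 + bcst (g i0 i1) * ab.2,
   bcst (g i1 i0) * ab.1 + bcst (g i1 i1) * ab.2).

End BiPoly.

Section Actions.
Variable R : fieldType.

(* g . P = P o g^{-1} *)
Definition actP (g : 'M[R]_2) (p : bipoly R) : bipoly R :=
  let uv := lin_app (invmx g) (bX R, bY R) in eval2 p uv.1 uv.2.

(* g . F = g o F o g^{-1}, with F = (f1, f2) an endomorphism of A^2 *)
Definition actF (g : 'M[R]_2) (F : bipoly R * bipoly R) :=
  let uv := lin_app (invmx g) (bX R, bY R) in
  lin_app g (eval2 F.1 uv.1 uv.2, eval2 F.2 uv.1 uv.2).

Definition finite_SL2_subgroup (G : seq 'M[R]_2) : Prop :=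
  [/\ 1%:M \in G,
      forall g, g \in G -> \det g = 1,
      forall g h, g \in G -> h \in G -> g *m h \in G
    & forall g, g \in G -> invmx g \in G].

End Actions.

(* Main.v *)
Require Import Defs.
From HB Require Import structures.
From mathcomp Require Import all_boot all_order all_algebra all_field ring.
Import GRing.Theory Num.Theory.
Local Open Scope ring_scope.

Section S.
Variable R : fieldType.
Notation B := (bipoly R).

Definition phi (u : B) : {rmorphism {poly R} -> B} :=
  horner_eval u \o map_poly polyC \o map_poly polyC.

Definition ev2 (u v : B) : {rmorphism B -> B} :=
  horner_eval v \o map_poly (phi u).

Lemma eval2E p u v : eval2 p u v = ev2 u v p.
Proof.
have hs : (size (map_poly (phi u) p) <= size p)%N by rewrite size_poly.
rewrite /eval2 /ev2 /= horner_evalE (horner_coef_wide _ hs).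
apply: eq_bigr => i _; rewrite coef_map /= /phi /= horner_evalE.
by rewrite -map_poly_comp.
Qed.


Lemma ev2X u v : ev2 u v (bX R) = u.
Proof. by rewrite /ev2 /bX /= map_polyC horner_evalE hornerC /phi /= !map_polyX horner_evalE hornerX. Qed.
Lemma ev2Y u v : ev2 u v (bY R) = v.
Proof. by rewrite /ev2 /bY /= map_polyX horner_evalE hornerX. Qed.
Lemma ev2C u v c : ev2 u v (bcst c) = bcst c.
Proof. by rewrite /ev2 /bcst /= map_polyC horner_evalE hornerC /phi /= !map_polyC horner_evalE hornerC. Qed.

Lemma morph_ext (f g : {rmorphism B -> B}) :
  f (bX R) = g (bX R) -> f (bY R) = g (bY R) ->
  (forall c, f (bcst c) = g (bcst c)) -> forall p, f p = g p.
Proof.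
move=> hX hY hC p; elim/poly_ind: p => [|p c IH]; first by rewrite !rmorph0.
rewrite !rmorphD !rmorphM IH; congr (_ * _ + _); first exact: hY.
elim/poly_ind: c => [|q d IHq]; first by rewrite !rmorph0.
have -> : (q * 'X + d%:P)%:P = q%:P * bX R + bcst d.
  by rewrite /bX /bcst polyCD polyCM.
by rewrite !rmorphD !rmorphM IHq hX hC.
Qed.

Lemma ev2_comp u v u' v' p :
  ev2 u' v' (ev2 u v p) = ev2 (ev2 u' v' u) (ev2 u' v' v) p.
Proof.
have hX : ev2 u' v' (ev2 u v (bX R)) = ev2 (ev2 u' v' u) (ev2 u' v' v) (bX R).
  by rewrite !ev2X.
have hY : ev2 u' v' (ev2 u v (bY R)) = ev2 (ev2 u' v' u) (ev2 u' v' v) (bY R).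
  by rewrite !ev2Y.
have hC c : ev2 u' v' (ev2 u v (bcst c)) = ev2 (ev2 u' v' u) (ev2 u' v' v) (bcst c).
  by rewrite !ev2C.
exact: (@morph_ext (ev2 u' v' \o ev2 u v) (ev2 (ev2 u' v' u) (ev2 u' v' v)) hX hY hC p).
Qed.

Lemma bcstD a b : bcst (a + b) = bcst a + bcst b :> B.
Proof. by rewrite /bcst !rmorphD. Qed.
Lemma bcstM a b : bcst (a * b) = bcst a * bcst b :> B.
Proof. by rewrite /bcst !rmorphM. Qed.
Lemma bcstN a : bcst (- a) = - bcst a :> B.
Proof. by rewrite /bcst !rmorphN. Qed.

Lemma det22 (A : 'M[R]_2) : \det A = A i0 i0 * A i1 i1 - A i0 i1 * A i1 i0.
Proof.
rewrite (expand_det_row _ i0) !big_ord_recl big_ord0 addr0 /cofactor !det_mx11 !mxE /=.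
have -> : (lift ord0 ord0 : 'I_2) = i1 by apply: val_inj.
rewrite /= !expr0 !expr1 !mul1r.
have -> : lift i1 0 = i0 :> 'I_2 by apply: val_inj.
by rewrite mulN1r mulrN.
Qed.

Lemma mul22 (A C : 'M[R]_2) i j : (A *m C) i j = A i i0 * C i0 j + A i i1 * C i1 j.
Proof.
rewrite mxE !big_ord_recl big_ord0 addr0.
have -> : (lift ord0 ord0 : 'I_2) = i1 by apply: val_inj.
by [].
Qed.

Lemma id22 i j : (1%:M : 'M[R]_2) i j = (i == j)%:R.
Proof. by rewrite mxE. Qed.

Lemma inv22 (g : 'M[R]_2) : \det g = 1 ->
  [/\ invmx g i0 i0 = g i1 i1, invmx g i0 i1 = - g i0 i1,
      invmx g i1 i0 = - g i1 i0 & invmx g i1 i1 = g i0 i0].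
Proof.
move=> hd; have gu : g \in unitmx by rewrite unitmxE hd unitr1.
have e := mulmxV gu.
have e00 : (g *m invmx g) i0 i0 = (1%:M : 'M[R]_2) i0 i0 by rewrite e.
have e01 : (g *m invmx g) i0 i1 = (1%:M : 'M[R]_2) i0 i1 by rewrite e.
have e10 : (g *m invmx g) i1 i0 = (1%:M : 'M[R]_2) i1 i0 by rewrite e.
have e11 : (g *m invmx g) i1 i1 = (1%:M : 'M[R]_2) i1 i1 by rewrite e.
move: e00 e01 e10 e11; rewrite !mul22 !id22 /= => e00 e01 e10 e11.
move: hd; rewrite det22 => hd.
set h := invmx g in e00 e01 e10 e11 *.
split.
- rewrite -[h i0 i0]mulr1 -hd.
  have -> : h i0 i0 * (g i0 i0 * g i1 i1 - g i0 i1 * g i1 i0) =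
    g i1 i1 * (g i0 i0 * h i0 i0 + g i0 i1 * h i1 i0) - g i0 i1 * (g i1 i0 * h i0 i0 + g i1 i1 * h i1 i0) by ring.
  by rewrite e00 e10; ring.
- rewrite -[h i0 i1]mulr1 -hd.
  have -> : h i0 i1 * (g i0 i0 * g i1 i1 - g i0 i1 * g i1 i0) =
    g i1 i1 * (g i0 i0 * h i0 i1 + g i0 i1 * h i1 i1) - g i0 i1 * (g i1 i0 * h i0 i1 + g i1 i1 * h i1 i1) by ring.
  by rewrite e01 e11; ring.
- rewrite -[h i1 i0]mulr1 -hd.
  have -> : h i1 i0 * (g i0 i0 * g i1 i1 - g i0 i1 * g i1 i0) =
    g i0 i0 * (g i1 i0 * h i0 i0 + g i1 i1 * h i1 i0) - g i1 i0 * (g i0 i0 * h i0 i0 + g i0 i1 * h i1 i0) by ring.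
  by rewrite e00 e10; ring.
- rewrite -[h i1 i1]mulr1 -hd.
  have -> : h i1 i1 * (g i0 i0 * g i1 i1 - g i0 i1 * g i1 i0) =
    g i0 i0 * (g i1 i0 * h i0 i1 + g i1 i1 * h i1 i1) - g i1 i0 * (g i0 i0 * h i0 i1 + g i0 i1 * h i1 i1) by ring.
  by rewrite e01 e11; ring.
Qed.

Definition xy (g : 'M[R]_2) := lin_app g (bX R, bY R).
Definition sig (g : 'M[R]_2) (p : B) := ev2 (xy g).1 (xy g).2 p.

Lemma sigX g : sig g (bX R) = bcst (g i0 i0) * bX R + bcst (g i0 i1) * bY R.
Proof. by rewrite /sig ev2X. Qed.
Lemma sigY g : sig g (bY R) = bcst (g i1 i0) * bX R + bcst (g i1 i1) * bY R.
Proof. by rewrite /sig ev2Y. Qed.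
Lemma sigC g c : sig g (bcst c) = bcst c.
Proof. by rewrite /sig ev2C. Qed.
Lemma sigD g p q : sig g (p + q) = sig g p + sig g q.
Proof. by rewrite /sig rmorphD. Qed.
Lemma sigB g p q : sig g (p - q) = sig g p - sig g q.
Proof. by rewrite /sig rmorphB. Qed.
Lemma sigM g p q : sig g (p * q) = sig g p * sig g q.
Proof. by rewrite /sig rmorphM. Qed.
Lemma sig_sum g (U : seq 'M[R]_2) (f : 'M[R]_2 -> B) :
  sig g (\sum_(k <- U) f k) = \sum_(k <- U) sig g (f k).
Proof. by rewrite /sig rmorph_sum. Qed.

Lemma ev2_lin u v a b : ev2 u v (bcst a * bX R + bcst b * bY R) = bcst a * u + bcst b * v.
Proof. by rewrite rmorphD !rmorphM !ev2C ev2X ev2Y. Qed.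
Lemma xy1 g : (xy g).1 = bcst (g i0 i0) * bX R + bcst (g i0 i1) * bY R.
Proof. by []. Qed.
Lemma xy2 g : (xy g).2 = bcst (g i1 i0) * bX R + bcst (g i1 i1) * bY R.
Proof. by []. Qed.

Lemma ev2_congr u v u2 v2 p : u = u2 -> v = v2 -> ev2 u v p = ev2 u2 v2 p.
Proof. by move=> -> ->. Qed.

Lemma sig_comp g h p : sig h (sig g p) = sig (g *m h) p.
Proof.
apply: (eq_trans (ev2_comp _ _ _ _ _)); apply: ev2_congr.
  rewrite [(xy g).1]xy1 ev2_lin xy1 xy2 xy1 !mul22 !bcstD !bcstM; ring.
rewrite [(xy g).2]xy2 ev2_lin xy1 xy2 xy2 !mul22 !bcstD !bcstM; ring.
Qed.

Lemma actPE g p : actP g p = sig (invmx g) p.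
Proof. by rewrite /actP eval2E. Qed.
Lemma actF1 g F : (actF g F).1 =
  bcst (g i0 i0) * sig (invmx g) F.1 + bcst (g i0 i1) * sig (invmx g) F.2.
Proof. by rewrite /actF /= !eval2E. Qed.
Lemma actF2 g F : (actF g F).2 =
  bcst (g i1 i0) * sig (invmx g) F.1 + bcst (g i1 i1) * sig (invmx g) F.2.
Proof. by rewrite /actF /= !eval2E. Qed.

Definition Phi (F : B * B) := F.1 * bY R - F.2 * bX R.

Lemma Phi_equiv g A : \det g = 1 -> Phi (actF g A) = actP g (Phi A).
Proof.
move=> hd; case: (inv22 g hd) => h00 h01 h10 h11.
rewrite /Phi actF1 actF2 actPE sigB !sigM sigX sigY h00 h01 h10 h11 !bcstN.
ring.
Qed.

Lemma invmxM (k g : 'M[R]_2) : k \in unitmx -> g \in unitmx ->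
  invmx (k *m g) = invmx g *m invmx k.
Proof.
move=> ku gu; have kgu : k *m g \in unitmx by rewrite unitmx_mul ku gu.
have e : (k *m g) *m (invmx g *m invmx k) = 1%:M.
  by rewrite mulmxA -[k *m g *m invmx g]mulmxA mulmxV // mulmx1 mulmxV.
by rewrite -[RHS](mulKmx kgu) e mulmx1.
Qed.

Lemma pairE (p q : B * B) : p.1 = q.1 -> p.2 = q.2 -> p = q.
Proof. by case: p q => [? ?] [? ?] /= -> ->. Qed.

Lemma actF_comp (k g : 'M[R]_2) (A : B * B) : k \in unitmx -> g \in unitmx ->
  actF k (actF g A) = actF (k *m g) A.
Proof.
move=> ku gu.
apply: pairE.
  rewrite [RHS](actF1 (k *m g) A) (actF1 k (actF g A)) (actF1 g A) (actF2 g A).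
  rewrite !sigD !sigM !sigC !sig_comp -invmxM // !mul22 !bcstD !bcstM; ring.
rewrite [RHS](actF2 (k *m g) A) (actF2 k (actF g A)) (actF1 g A) (actF2 g A).
rewrite !sigD !sigM !sigC !sig_comp -invmxM // !mul22 !bcstD !bcstM; ring.
Qed.


Opaque sig ev2 actF actP eval2.

Lemma alg3 (a b c x y : B) : a * (c * x) + b * (c * y) = c * (a * x + b * y).
Proof. by ring. Qed.

Lemma sumD (U : seq 'M[R]_2) (f g : 'M[R]_2 -> B) :
  \sum_(i <- U) (f i + g i) = \sum_(i <- U) f i + \sum_(i <- U) g i.
Proof. by rewrite big_split. Qed.

Lemma sum_lin (U : seq 'M[R]_2) (a b : B) (f g : 'M[R]_2 -> B) :
  \sum_(i <- U) (a * f i + b * g i) = a * \sum_(i <- U) f i + b * \sum_(i <- U) g i.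
Proof. by rewrite big_split /= -!mulr_sumr. Qed.

Lemma PhiE (a b : B) : Phi (a, b) = a * bY R - b * bX R.
Proof. by []. Qed.

Lemma lin2 (U : seq 'M[R]_2) (c : B) (f g : 'M[R]_2 -> B) :
  (c * \sum_(i <- U) f i) * bY R - (c * \sum_(i <- U) g i) * bX R =
  c * \sum_(i <- U) (f i * bY R - g i * bX R).
Proof. by rewrite sumrB -!mulr_suml -!mulrA mulrBr. Qed.

Lemma bcstMn a n : bcst a *+ n = bcst (a *+ n) :> B.
Proof. by rewrite /bcst !rmorphMn. Qed.

Lemma pairE' (q : B * B) (a b : B) : q.1 = a -> q.2 = b -> q = (a, b).
Proof. by case: q => ? ? /= -> ->. Qed.

Lemma actF1p g (a b : B) : (actF g (a, b)).1 =
  bcst (g i0 i0) * sig (invmx g) a + bcst (g i0 i1) * sig (invmx g) b.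
Proof. exact: actF1. Qed.
Lemma actF2p g (a b : B) : (actF g (a, b)).2 =
  bcst (g i1 i0) * sig (invmx g) a + bcst (g i1 i1) * sig (invmx g) b.
Proof. exact: actF2. Qed.

Lemma G_unit (G : seq 'M[R]_2) g : finite_SL2_subgroup G -> g \in G -> g \in unitmx.
Proof. by case=> _ hd _ _ hg; rewrite unitmxE hd ?unitr1. Qed.

Lemma sum_mul (G : seq 'M[R]_2) (f : 'M[R]_2 -> B) k : finite_SL2_subgroup G -> k \in G ->
  \sum_(g <- undup G) f (k *m g) = \sum_(g <- undup G) f g.
Proof.
move=> hG hk; have ku := G_unit _ _ hG hk.
case: hG => h1 hd hM hI.
rewrite -(big_map (mulmx k) xpredT f); apply: perm_big.
apply: uniq_perm; first by rewrite map_inj_uniq ?undup_uniq //; exact: can_inj (mulKmx ku).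
  exact: undup_uniq.
move=> g; rewrite mem_undup; apply/mapP/idP.
  by case=> g'; rewrite mem_undup => hg' ->; apply: hM.
move=> hg; exists (invmx k *m g); first by rewrite mem_undup hM ?hI.
by rewrite mulKVmx.
Qed.

Lemma decomp P : at00 P = 0 -> exists A : B * B, Phi A = P.
Proof.
move=> h0.
have take1 (T : nzRingType) (p : {poly T}) : take_poly 1 p = (p`_0)%:P.
  by apply/polyP => i; rewrite coef_take_poly coefC; case: i.
set Q := P`_0.
have hQ : Q`_0 = 0 by move: h0; rewrite /at00 !horner_coef0.
have eQ : Q = drop_poly 1 Q * 'X by rewrite -{1}(poly_take_drop 1 Q) take1 hQ add0r expr1.
have eP : P = Q%:P + drop_poly 1 P * 'X by rewrite -{1}(poly_take_drop 1 P) take1 expr1.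
exists (drop_poly 1 P, - (drop_poly 1 Q)%:P).
rewrite /Phi /= [RHS]eP {2}eQ /bY /bX mulNr opprK -polyCM addrC.
by [].
Qed.

Lemma sum_const (U : seq 'M[R]_2) (p : B) : \sum_(g <- U) p = p *+ size U.
Proof. by elim: U => [|a U IH]; rewrite ?big_nil ?big_cons ?IH ?mulrS. Qed.

Lemma dir21 (G : seq 'M[R]_2) (F : B * B) : finite_SL2_subgroup G -> (forall g, g \in G -> actF g F = F) ->
  at00 (Phi F) = 0 /\ forall g, g \in G -> actP g (Phi F) = Phi F.
Proof.
move=> hG hF; split.
  rewrite /at00 /Phi /bY /bX hornerD hornerN !hornerM hornerX hornerC mulr0 sub0r.
  by rewrite hornerN hornerM hornerX mulr0 oppr0.
move=> g hg; case: (hG) => _ hd _ _.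
have := Phi_equiv g F (hd g hg); rewrite hF //.
Qed.

Lemma dir12 (G : seq 'M[R]_2) (P : B) : finite_SL2_subgroup G -> (size (undup G))%:R != 0 :> R ->
  at00 P = 0 -> (forall g, g \in G -> actP g P = P) ->
  exists F, (forall g, g \in G -> actF g F = F) /\ Phi F = P.
Proof.
move=> hG hn h0 hP.
have [A hA] := decomp P h0.
set U := undup G.
set c := bcst (R:=R) (size U)%:R^-1.
exists (c * \sum_(g <- U) (actF g A).1, c * \sum_(g <- U) (actF g A).2).
split.
  move=> k hk; have ku := G_unit _ _ hG hk.
  have key (i : B * B -> B) : \sum_(g <- U) i (actF k (actF g A)) = \sum_(g <- U) i (actF g A).
    rewrite -(sum_mul G (fun g => i (actF g A)) k hG hk).
    apply: eq_big_seq => g; rewrite mem_undup => hg.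
    by rewrite actF_comp // (G_unit _ _ hG hg).
  apply: pairE'.
    rewrite actF1p !sigM !sigC !sig_sum -(key fst).
    have e : \sum_(g <- U) fst (actF k (actF g A)) = \sum_(g <- U) (bcst (k i0 i0) * sig (invmx k) (actF g A).1 + bcst (k i0 i1) * sig (invmx k) (actF g A).2).
      by apply: eq_bigr => g _; exact: actF1.
    rewrite e /c.
    exact: (eq_trans (alg3 _ _ _ _ _) (congr1 (GRing.mul _) (esym (sum_lin _ _ _ _ _)))).
  rewrite actF2p !sigM !sigC !sig_sum -(key snd).
    have e : \sum_(g <- U) snd (actF k (actF g A)) = \sum_(g <- U) (bcst (k i1 i0) * sig (invmx k) (actF g A).1 + bcst (k i1 i1) * sig (invmx k) (actF g A).2).
      by apply: eq_bigr => g _; exact: actF2.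
    rewrite e /c.
    exact: (eq_trans (alg3 _ _ _ _ _) (congr1 (GRing.mul _) (esym (sum_lin _ _ _ _ _)))).
rewrite PhiE (lin2 U c (fun g => (actF g A).1) (fun g => (actF g A).2)).
have -> : \sum_(g <- U) ((actF g A).1 * bY R - (actF g A).2 * bX R) = \sum_(g <- U) P.
  apply: eq_big_seq => g; rewrite mem_undup => hg.
  case: (hG) => _ hd _ _.
  by rewrite -[_ - _]/(Phi (actF g A)) Phi_equiv ?hd // hA hP.
rewrite sum_const /c mulrnAr -mulrnAl bcstMn -(mulr_natr ((size U)%:R^-1)) mulVf //.
by rewrite /bcst !rmorph1 mul1r.
Qed.
End S.

Theorem mainTheorem10 (R : numClosedFieldType) (G : seq 'M[R]_2)
    (P : {poly {poly R}}) :
  finite_SL2_subgroup G ->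
  ((at00 P = 0 /\ forall g, g \in G -> actP g P = P) <->
   (exists F : {poly {poly R}} * {poly {poly R}},
      (forall g, g \in G -> actF g F = F) /\
      F.1 * bY R - F.2 * bX R = P)).
Proof.
move=> hG; split.
  case=> h0 hP.
  have hn : (size (undup G))%:R != 0 :> R.
    rewrite pnatr_eq0 size_eq0; apply/eqP => e.
    case: hG => h1 _ _ _; move: h1; by rewrite -mem_undup e.
  have [F [hF hPhi]] := dir12 _ _ _ hG hn h0 hP.
  by exists F; split.
case=> F [hF e]; rewrite -e; exact: (dir21 _ _ _ hG hF).
Qed.
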